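(* Let $A$ be a physical system with Hamiltonian $H^A=\sum_{x=1}^m a_x|x\rangle\langle x|$ with all $a_x\ge0$, let $\psi=|\psi\rangle\langle\psi|$ be a pure state on $A$, and let $\alpha\in(1/2,1)$. Then there exists a sequence of pure states $\{\chi_n\}_{n\in\mathbb{N}}$, $\chi_n$ a pure state on $A^n$, such that: (1) $\lim_{n\to\infty}\|\psi^{\otimes n}-\chi_n\|_1=0$; (2) $\chi_n$ can be expressed as a linear combination of no more than $(n+1)^m$ eigenvectors of $H^{A^n}$; (3) the energy spread of $\chi_n$ is at most $4n^\alpha\sum_{x=1}^m a_x$.
   Context: $A^n$ denotes $n$ copies of $A$ with total Hamiltonian $H^{A^n}=\sum_{i=1}^n I\otimes\cdots\otimes H^A\otimes\cdots\otimes I$ ($H^A$ in the $i$-th slot). The energy spread of a pure state on a system with Hamiltonian $H$ is the difference between the largest and smallest eigenvalues $\lambda$ of $H$ for which the state has nonzero component in the $\lambda$-eigenspace (i.e. the maximal minus minimal energy appearing when the state is written as a superposition of energy eigenvectors). *)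

(* Defs.v *)
From HB Require Import structures.
From mathcomp Require Import all_boot all_order all_algebra.
From mathcomp Require Import all_classical all_reals all_analysis.
From mathcomp Require Import complex.
From Stdlib Require Import ClassicalEpsilon.

Set Implicit Arguments.
Unset Strict Implicit.
Unset Printing Implicit Defensive.

Import Order.TTheory GRing.Theory Num.Theory.
Local Open Scope ring_scope.

Section QuantumDefs.
Variable R : realType.
Local Notation C := R[i].

Definition rC (x : R) : C := Complex x 0.

(* Vectors and operators on the Hilbert space C^T with orthonormal basis
   indexed by the finite type T. *)
Definition vec (T : finType) := T -> C.
Definition op (T : finType) := T -> T -> C.

Definition inner (T : finType) (v w : vec T) : C := \sum_(i : T) Num.conj (v i) * w i.
Definition is_unit_vec (T : finType) (v : vec T) : Prop := inner v v = 1.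

Definition opmul (T : finType) (A B : op T) : op T :=
  fun i j => \sum_(k : T) A i k * B k j.
Definition opadj (T : finType) (A : op T) : op T := fun i j => Num.conj (A j i).
Definition opsub (T : finType) (A B : op T) : op T := fun i j => A i j - B i j.
Definition optr (T : finType) (A : op T) : C := \sum_(i : T) A i i.
Definition opapp (T : finType) (A : op T) (v : vec T) : vec T :=
  fun i => \sum_(j : T) A i j * v j.

Definition psd (T : finType) (A : op T) : Prop :=
  (forall i j, A i j = Num.conj (A j i)) /\
  (forall v : vec T, 0 <= inner v (opapp A v)).

(* the (unique) positive semidefinite square root, chosen by description *)
Definition sqrtm (T : finType) (A : op T) : op T :=
  epsilon (inhabits (fun _ _ => 0 : C))
    (fun S : op T => psd S /\ opmul S S = A).

Definition trnorm (T : finType) (X : op T) : R :=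
  complex.Re (optr (sqrtm (opmul (opadj X) X))).

Definition dens (T : finType) (v : vec T) : op T :=
  fun i j => v i * Num.conj (v j).

(* n copies of A = C^('I_m): basis indexed by sequences x^n in 'I_m^n *)
Definition seqs (n m : nat) := {ffun 'I_n -> 'I_m}.

Definition tens_pow (m : nat) (psi : vec 'I_m) (n : nat) : vec (seqs n m) :=
  fun s => \prod_(i < n) psi (s i).

Definition hamA (m : nat) (a : 'I_m -> R) : op 'I_m :=
  fun x y => if x == y then rC (a x) else 0.

(* H^{A^n} = sum_i I (x) .. (x) H^A (x) .. (x) I, which is diagonal in the
   product basis with eigenvalue sum_i a_{x_i} on |x_1 .. x_n> *)
Definition hamAn (m : nat) (a : 'I_m -> R) (n : nat) : op (seqs n m) :=
  fun s t => if s == t then rC (\sum_(i < n) a (s i)) else 0.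

Definition eigenvector (T : finType) (H : op T) (v : vec T) : Prop :=
  (exists i, v i != 0) /\ exists l : C, opapp H v = (fun i => l * v i).

Definition comb_of_eigvecs (T : finType) (H : op T) (v : vec T) (k : nat) : Prop :=
  exists (j : nat) (e : 'I_j -> vec T) (c : 'I_j -> C),
    (j <= k)%N /\ (forall i, eigenvector H (e i)) /\
    v = (fun t => \sum_(i < j) c i * e i t).

(* energies appearing in v: real l such that v has a nonzero component in
   the l-eigenspace of H (i.e. v is not orthogonal to that eigenspace) *)
Definition energies (T : finType) (H : op T) (v : vec T) : set R :=
  [set l | exists w : vec T, opapp H w = (fun i => rC l * w i) /\ inner w v != 0].

Definition energy_spread (T : finType) (H : op T) (v : vec T) : R :=
  sup (energies H v) - inf (energies H v).

End QuantumDefs.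
Arguments tens_pow {R m} psi n _.
Arguments hamAn {R m} a n _ _.

(* Main.v *)
Require Import Defs.
From HB Require Import structures.
From mathcomp Require Import all_boot all_order all_algebra.
From mathcomp Require Import all_classical all_reals all_analysis.
From mathcomp Require Import complex.
From mathcomp Require Import ring lra.
From Stdlib Require Import ClassicalEpsilon.
Import Order.TTheory GRing.Theory Num.Theory.
Import numFieldNormedType.Exports.
Local Open Scope classical_set_scope.
Local Open Scope ring_scope.
Set Implicit Arguments.
Unset Strict Implicit.
Unset Printing Implicit Defensive.

Section LinAlg.
Variable R : realType.
Local Notation C := R[i].

Lemma rCM (x y : R) : rC (x * y) = rC x * rC y.
Proof. rewrite /rC /=; congr Complex; ring. Qed.
Lemma rCD (x y : R) : rC (x + y) = rC x + rC y.
Proof. rewrite /rC /=; congr Complex; ring. Qed.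
Lemma rCB (x y : R) : rC (x - y) = rC x - rC y.
Proof. rewrite /rC /=; congr Complex; ring. Qed.
Lemma rC1 : rC 1 = 1 :> C. Proof. by []. Qed.
Lemma rC0 : rC 0 = 0 :> C. Proof. by []. Qed.
Lemma rC_inj (x y : R) : rC x = rC y -> x = y.
Proof. by case. Qed.
Lemma conj_rC (x : R) : Num.conj (rC x) = rC x.
Proof. by rewrite /rC /=; congr Complex; rewrite oppr0. Qed.
Lemma rC_ge0 (x : R) : (0 <= rC x) = (0 <= x).
Proof. by rewrite lecE /= eqxx. Qed.
Lemma rC_sum (I : finType) (P : pred I) (F : I -> R) :
  rC (\sum_(i | P i) F i) = \sum_(i | P i) rC (F i).
Proof. exact: (rmorph_sum (real_complex R)). Qed.
Lemma rC_prod (I : finType) (F : I -> R) : rC (\prod_i F i) = \prod_i rC (F i).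
Proof. exact: (rmorph_prod (real_complex R)). Qed.

Definition nrm2 (z : C) : R := complex.Re z ^+ 2 + complex.Im z ^+ 2.
Lemma conjzz (z : C) : Num.conj z * z = rC (nrm2 z).
Proof. case: z => x y; rewrite /nrm2 /rC /=; congr Complex; ring. Qed.
Lemma nrm2_ge0 z : 0 <= nrm2 z.
Proof. by rewrite /nrm2 addr_ge0 // sqr_ge0. Qed.

Variable T : finType.

Definition delta (j : T) : vec R T := fun i => (i == j)%:R.
Definition herm (A : op R T) := forall i j, A i j = Num.conj (A j i).

Lemma opapp_delta (A : op R T) i j : opapp A (delta j) i = A i j.
Proof.
rewrite /opapp /delta (bigD1 j) //= eqxx mulr1 big1 ?addr0 // => k /negbTE ->.
by rewrite mulr0.
Qed.

Lemma op_ext (A B : op R T) : (forall w, opapp A w = opapp B w) -> A = B.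
Proof.
move=> h; apply/funext => i; apply/funext => j.
by rewrite -!opapp_delta h.
Qed.

Lemma opapp_mul (A B : op R T) (w : vec R T) : opapp (opmul A B) w = opapp A (opapp B w).
Proof.
apply/funext => i; rewrite /opapp /opmul.
under eq_bigr do rewrite mulr_suml.
rewrite exchange_big /=; apply: eq_bigr => k _.
by rewrite mulr_sumr; apply: eq_bigr => j _; rewrite mulrA.
Qed.

Lemma opapp_lin (A : op R T) (a b : C) (x y : vec R T) :
  opapp A (fun i => a * x i + b * y i) = fun i => a * opapp A x i + b * opapp A y i.
Proof.
apply/funext => i; rewrite /opapp !mulr_sumr -big_split /=.
by apply: eq_bigr => j _; ring.
Qed.

Lemma opapp_scale (A : op R T) (a : C) (x : vec R T) :
  opapp A (fun i => a * x i) = fun i => a * opapp A x i.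
Proof.
apply/funext => i; rewrite /opapp !mulr_sumr.
by apply: eq_bigr => j _; ring.
Qed.

Lemma opapp_add (A : op R T) (x y : vec R T) :
  opapp A (fun i => x i + y i) = fun i => opapp A x i + opapp A y i.
Proof.
apply/funext => i; rewrite /opapp -big_split /=.
by apply: eq_bigr => j _; ring.
Qed.

Lemma opapp_sub (A : op R T) (x y : vec R T) :
  opapp A (fun i => x i - y i) = fun i => opapp A x i - opapp A y i.
Proof.
apply/funext => i; rewrite /opapp -sumrB /=.
by apply: eq_bigr => j _; ring.
Qed.

Lemma opapp0 (A : op R T) : opapp A (fun _ => 0) = fun _ => 0.
Proof. by apply/funext => i; rewrite /opapp big1 // => j _; rewrite mulr0. Qed.

Lemma inner_linr (x : vec R T) (a b : C) y z :
  inner x (fun i => a * y i + b * z i) = a * inner x y + b * inner x z.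
Proof.
rewrite /inner !mulr_sumr -big_split /=.
by apply: eq_bigr => j _; ring.
Qed.

Lemma inner_scaler (x : vec R T) (a : C) y : inner x (fun i => a * y i) = a * inner x y.
Proof. rewrite /inner !mulr_sumr; by apply: eq_bigr => j _; ring. Qed.

Lemma inner_scalel (x : vec R T) (a : C) y :
  inner (fun i => a * y i) x = Num.conj a * inner y x.
Proof. rewrite /inner !mulr_sumr; apply: eq_bigr => j _; rewrite rmorphM /=; ring. Qed.

Lemma inner_subr (x y z : vec R T) : inner x (fun i => y i - z i) = inner x y - inner x z.
Proof. rewrite /inner -sumrB; by apply: eq_bigr => j _; ring. Qed.

Lemma inner_conj (x y : vec R T) : inner y x = Num.conj (inner x y).
Proof.
rewrite /inner rmorph_sum /=; apply: eq_bigr => j _.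
by rewrite rmorphM /= conjCK mulrC.
Qed.

Lemma inner0r (x : vec R T) : inner x (fun _ => 0) = 0.
Proof. by rewrite /inner big1 // => j _; rewrite mulr0. Qed.

Lemma inner_ge0 (z : vec R T) : 0 <= inner z z.
Proof.
by rewrite /inner sumr_ge0 // => i _; rewrite conjzz rC_ge0 nrm2_ge0.
Qed.

Lemma inner_eq0 (z : vec R T) : inner z z = 0 -> z = fun _ => 0.
Proof.
move=> h; apply/funext => i.
have hge : forall j, 0 <= Num.conj (z j) * z j.
  by move=> j; rewrite conjzz rC_ge0 nrm2_ge0.
move: h; rewrite /inner => h.
have := psumr_eq0P (fun j _ => hge j) h (i:=i) isT.
by rewrite mulrC => /eqP; rewrite mul_conjC_eq0 => /eqP.
Qed.

Lemma inner_app_herm (S : op R T) (x y : vec R T) :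
  herm S -> inner (opapp S x) y = inner x (opapp S y).
Proof.
move=> hS; rewrite /inner /opapp.
under eq_bigr do rewrite rmorph_sum /= mulr_suml.
rewrite exchange_big /=; apply: eq_bigr => j _.
rewrite mulr_sumr; apply: eq_bigr => i _.
by rewrite rmorphM /= -hS; ring.
Qed.

Lemma psd_herm (S : op R T) : psd S -> herm S.
Proof. by case. Qed.

Lemma herm_sq0 (M : op R T) :
  herm M -> (forall x, opapp M (opapp M x) = fun _ => 0) ->
  forall x, opapp M x = fun _ => 0.
Proof.
move=> hM h x; apply: inner_eq0.
by rewrite inner_app_herm // h inner0r.
Qed.


Lemma herm_sq (S : op R T) : herm S -> herm (opmul S S).
Proof.
move=> hS i j; rewrite /opmul rmorph_sum /=; apply: eq_bigr => k _.
by rewrite rmorphM /= -!hS mulrC.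
Qed.

Lemma opapp_opscale (A : op R T) (c : C) (x : vec R T) :
  opapp (fun i j => c * A i j) x = fun i => c * opapp A x i.
Proof. apply/funext => i; rewrite /opapp mulr_sumr; apply: eq_bigr => j _; ring. Qed.

Lemma opapp_opscaler (A : op R T) (c : C) (x : vec R T) :
  opapp (fun i j => A i j * c) x = fun i => opapp A x i * c.
Proof. apply/funext => i; rewrite /opapp mulr_suml; apply: eq_bigr => j _; ring. Qed.

Lemma sqrt_inv_aux (q : R) : 0 < q -> Num.sqrt q * q^-1 = (Num.sqrt q)^-1.
Proof.
move=> qp; have sp : 0 < Num.sqrt q by rewrite sqrtr_gt0.
have qe : q = Num.sqrt q * Num.sqrt q by rewrite -expr2 sqr_sqrtr // ltW.
rewrite [in q^-1]qe invfM mulrA divff ?mul1r //; exact: lt0r_neq0.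
Qed.

Lemma sqrt_unique (S M : op R T) (q : R) : 0 <= q -> psd S -> opmul S S = M ->
  opmul M M = (fun i j => rC q * M i j) ->
  S = fun i j => M i j * rC ((Num.sqrt q)^-1).
Proof.
move=> hq hpsd hSS hMM.
have hS : herm S by case: hpsd.
have hM : herm M by rewrite -hSS; exact: herm_sq.
have S2 x : opapp S (opapp S x) = opapp M x by rewrite -opapp_mul hSS.
have M2 x : opapp M (opapp M x) = fun i => rC q * opapp M x i.
  by rewrite -opapp_mul hMM opapp_opscale.
have key x : inner (opapp S x) (opapp S x) = inner x (opapp M x).
  by rewrite inner_app_herm // S2.
have kill x : opapp M x = (fun _ => 0) -> opapp S x = (fun _ => 0).
  by move=> h; apply: inner_eq0; rewrite key h inner0r.
apply: op_ext => w; rewrite opapp_opscaler.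
move: hq; rewrite le_eqVlt => /orP [/eqP q0|qpos].
  have M0 : forall x, opapp M x = fun _ => 0.
    apply: herm_sq0 => // x; rewrite M2 -q0 rC0.
    by apply/funext => i; rewrite mul0r.
  by rewrite kill // M0; apply/funext => i; rewrite mul0r.
pose w1 := fun i => rC (q^-1) * opapp M w i.
pose w0 := fun i => w i - w1 i.
have Mw1 : opapp M w1 = opapp M w.
  rewrite /w1 opapp_scale M2; apply/funext => i.
  by rewrite mulrA -rCM mulVf ?rC1 ?mul1r // lt0r_neq0.
have Sw0 : opapp S w0 = fun _ => 0.
  apply: kill; rewrite /w0 opapp_sub Mw1; apply/funext => i; by rewrite subrr.
pose sq := rC (Num.sqrt q).
have sqsq : sq * sq = rC q by rewrite -rCM -expr2 sqr_sqrtr // ltW.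
pose z := fun i => opapp S w1 i - sq * w1 i.
have Sz : opapp S z = fun i => - sq * z i.
  rewrite /z opapp_sub opapp_scale S2 Mw1; apply/funext => i.
  have -> : opapp M w i = rC q * w1 i.
    by rewrite /w1 mulrA -rCM divff ?mul1r // lt0r_neq0.
  rewrite -sqsq; ring.
have z0 : z = fun _ => 0.
  apply: inner_eq0; case: hpsd => _ /(_ z); rewrite Sz inner_scaler => h.
  have sqp : 0 < sq by rewrite /sq ltcR sqrtr_gt0.
  apply/le_anti; rewrite inner_ge0 andbT.
  by rewrite -(pmulr_rle0 _ sqp) -oppr_ge0 -mulNr.
have Sw1 : opapp S w1 = fun i => sq * w1 i.
  apply/funext => i; have := congr1 (fun f => f i) z0; rewrite /z /=.
  by move/eqP; rewrite subr_eq0 => /eqP.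
have -> : opapp S w = opapp S (fun i => w0 i + w1 i).
  by congr opapp; apply/funext => i; rewrite /w0 subrK.
rewrite opapp_add Sw0 Sw1; apply/funext => i; rewrite add0r /w1 /sq mulrA -rCM.
by rewrite sqrt_inv_aux // mulrC.
Qed.

End LinAlg.
Section Trnorm.
Variable R : realType.
Local Notation C := R[i].
Variable T : finType.
Variables u v : vec R T.
Hypothesis hu : is_unit_vec u.
Hypothesis hv : is_unit_vec v.

Local Notation D := (opsub (dens u) (dens v)).
Local Notation a := (inner u v).
Definition lc (x y : C) : vec R T := fun i => x * u i + y * v i.

Lemma opapp_opsub (A B : op R T) (w : vec R T) :
  opapp (opsub A B) w = fun i => opapp A w i - opapp B w i.
Proof. apply/funext => i; rewrite /opapp /opsub -sumrB; apply: eq_bigr => j _; ring. Qed.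

Lemma dens_app (x w : vec R T) : opapp (dens x) w = fun i => inner x w * x i.
Proof.
apply/funext => i; rewrite /opapp /dens /inner mulr_suml; apply: eq_bigr => j _; ring.
Qed.

Lemma D_app w : opapp D w = lc (inner u w) (- inner v w).
Proof. rewrite opapp_opsub !dens_app /lc; apply/funext => i; ring. Qed.

Lemma D_lc x y : opapp D (lc x y) = lc (x + y * a) (- (x * Num.conj a + y)).
Proof.
rewrite D_app /lc !inner_linr hu hv (inner_conj u v); congr lc; ring.
Qed.

Lemma D_herm : herm D.
Proof. move=> i j; rewrite /opsub /dens rmorphB !rmorphM /= !conjCK; ring. Qed.

Lemma D_adj : opadj D = D.
Proof. apply/funext => i; apply/funext => j; rewrite /opadj -D_herm //. Qed.

Local Notation X := (opmul (opadj D) D).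
Local Notation q := (1 - a * Num.conj a).

Lemma X_app w : opapp X w = opapp D (opapp D w).
Proof. by rewrite D_adj opapp_mul. Qed.

Lemma D2_lc x y : opapp D (opapp D (lc x y)) = lc (q * x) (q * y).
Proof. rewrite !D_lc; congr lc; ring. Qed.

Lemma X_lc x y : opapp X (lc x y) = lc (q * x) (q * y).
Proof. by rewrite X_app D2_lc. Qed.

Lemma XX : opmul X X = fun i j => q * X i j.
Proof.
apply: op_ext => w; rewrite opapp_mul opapp_opscale [opapp X w]X_app D_app X_lc.
apply/funext => i; rewrite /lc; ring.
Qed.

Definition qR := 1 - nrm2 a.
Lemma qE : q = rC qR.
Proof. by rewrite /qR rCB rC1 mulrC conjzz. Qed.

Lemma X_herm : herm X.
Proof. rewrite D_adj; apply: herm_sq; exact: D_herm. Qed.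

Lemma X_psd : psd X.
Proof.
split; first exact: X_herm.
move=> w; rewrite X_app -inner_app_herm; first exact: inner_ge0.
exact: D_herm.
Qed.

Lemma qR_ge0 : 0 <= qR.
Proof.
have lu : lc 1 0 = u by apply/funext => i; rewrite /lc; ring.
have Xu : opapp X u = fun i => q * u i.
  have := X_lc 1 0; rewrite lu => ->; apply/funext => i; rewrite /lc; ring.
have := (X_psd.2 u).
by rewrite Xu inner_scaler hu mulr1 qE rC_ge0.
Qed.

Lemma inner_delta (x : vec R T) i : inner x (delta R i) = Num.conj (x i).
Proof.
rewrite /inner /delta (bigD1 i) //= eqxx mulr1 big1 ?addr0 // => k /negbTE ->.
by rewrite mulr0.
Qed.

Lemma trX : optr X = rC (2 * qR).
Proof.
rewrite /optr.
have E i : X i i = (Num.conj (u i) - Num.conj (v i) * a) * u i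
    - (Num.conj (u i) * Num.conj a - Num.conj (v i)) * v i.
  rewrite -(opapp_delta X i i) X_app [opapp D (delta R i)]D_app D_lc /lc !inner_delta.
  ring.
under eq_bigr do rewrite E.
have -> : rC (2 * qR) = inner u u - a * inner v u - Num.conj a * inner u v + inner v v.
  rewrite hu hv (inner_conj u v) rCM -qE.
  have -> : rC 2 = 2 :> C by exact: (rmorph_nat (real_complex R) 2).
  ring.
rewrite /inner !mulr_sumr -!sumrB -big_split /=; apply: eq_bigr => i _; ring.
Qed.

Lemma sqrt_aux1 (r : R) : 0 < r -> r * ((Num.sqrt r)^-1 * (Num.sqrt r)^-1) = 1.
Proof.
move=> rp; have sp : 0 < Num.sqrt r by rewrite sqrtr_gt0.
have qe : r = Num.sqrt r * Num.sqrt r by rewrite -expr2 sqr_sqrtr // ltW.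
set s := Num.sqrt r in sp qe *; rewrite qe; field; exact: lt0r_neq0.
Qed.

Lemma sqrt_aux2 (r : R) : 0 < r -> 2 * r * (Num.sqrt r)^-1 = 2 * Num.sqrt r.
Proof.
move=> rp; have sp : 0 < Num.sqrt r by rewrite sqrtr_gt0.
have qe : r = Num.sqrt r * Num.sqrt r by rewrite -expr2 sqr_sqrtr // ltW.
set s := Num.sqrt r in sp qe *; rewrite qe; field; exact: lt0r_neq0.
Qed.

Definition S0 : op R T := fun i j => X i j * rC ((Num.sqrt qR)^-1).

Lemma X_zero : qR = 0 -> X = fun _ _ => 0.
Proof.
move=> q0.
have h : forall w, opapp X w = fun _ => 0.
  apply: herm_sq0; first exact: X_herm.
  move=> x; rewrite -opapp_mul XX opapp_opscale qE q0 rC0.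
  by apply/funext => i; rewrite mul0r.
apply/funext => i; apply/funext => j; by rewrite -opapp_delta h.
Qed.

Lemma S0_psd : psd S0.
Proof.
split.
  move=> i j; rewrite /S0 rmorphM /= conj_rC -X_herm //.
move=> w; rewrite /S0 opapp_opscaler.
have -> : (fun i => opapp X w i * rC (Num.sqrt qR)^-1) = fun i => rC (Num.sqrt qR)^-1 * opapp X w i.
  by apply/funext => i; rewrite mulrC.
rewrite inner_scaler mulr_ge0 //; last exact: X_psd.2.
by rewrite rC_ge0 invr_ge0 sqrtr_ge0.
Qed.

Lemma S0_sq : opmul S0 S0 = X.
Proof.
have := qR_ge0; rewrite le_eqVlt => /orP [/eqP q0|qp].
  rewrite /S0 X_zero -?q0 //; apply/funext => i; apply/funext => j.
  by rewrite /opmul big1 // => k _; rewrite !mul0r.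
apply/funext => i; apply/funext => j.
rewrite /S0 /opmul.
have -> : \sum_k (X i k * rC (Num.sqrt qR)^-1 * (X k j * rC (Num.sqrt qR)^-1))
   = (\sum_k X i k * X k j) * (rC (Num.sqrt qR)^-1 * rC (Num.sqrt qR)^-1).
  by rewrite mulr_suml; apply: eq_bigr => k _; ring.
have -> : \sum_k X i k * X k j = opmul X X i j by [].
have h1 : rC qR * (rC (Num.sqrt qR)^-1 * rC (Num.sqrt qR)^-1) = 1.
  by rewrite -!rCM sqrt_aux1.
by rewrite XX qE mulrAC h1 mul1r.
Qed.

Lemma sqrtmX : sqrtm X = S0.
Proof.
rewrite /sqrtm.
have ex : exists S : op R T, psd S /\ opmul S S = X.
  by exists S0; split; [exact: S0_psd | exact: S0_sq].
have [h1 h2] := epsilon_spec (inhabits (fun _ _ => 0 : C)) (fun S : op R T => psd S /\ opmul S S = X) ex.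
have XX' := XX; rewrite qE in XX'.
by rewrite (sqrt_unique qR_ge0 h1 h2 XX').
Qed.

Lemma trnorm_pure : trnorm (opsub (dens u) (dens v)) = 2 * Num.sqrt (1 - nrm2 (inner u v)).
Proof.
rewrite /trnorm sqrtmX /optr /S0 -mulr_suml.
have -> : \sum_i X i i = optr X by [].
rewrite trX -rCM /=.
rewrite -/qR.
have := qR_ge0; rewrite le_eqVlt => /orP [/eqP q0|qp].
  by rewrite -q0 sqrtr0 !mulr0 mul0r.
exact: sqrt_aux2.
Qed.

End Trnorm.
Section Prob.
Variables (R : realType) (m : nat) (a : 'I_m -> R).
Hypothesis ha : forall x, 0 <= a x.
Variable psi : vec R 'I_m.
Hypothesis hpsi : is_unit_vec psi.
Variable alpha : R.
Hypothesis hal1 : 1 / 2 < alpha.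
Hypothesis hal2 : alpha < 1.

Definition wt (x : 'I_m) : R := nrm2 (psi x).
Lemma wt_ge0 x : 0 <= wt x. Proof. exact: nrm2_ge0. Qed.
Lemma sum_wt : \sum_x wt x = 1.
Proof.
apply: rC_inj; rewrite rC_sum rC1 -hpsi /inner; apply: eq_bigr => x _.
by rewrite conjzz.
Qed.

Definition sa := \sum_x a x.
Definition mu := \sum_x wt x * a x.
Definition gg x := a x - mu.
Definition En n (s : seqs n m) := \sum_(i < n) a (s i).
Definition GG n (s : seqs n m) := \sum_(i < n) gg (s i).
Definition tt (n : nat) := 2 * (n%:R `^ alpha) * sa.
Definition typ n (s : seqs n m) : bool := `|GG s| <= tt n.
Definition WW n (s : seqs n m) := \prod_(i < n) wt (s i).

Lemma sa_ge0 : 0 <= sa. Proof. exact: sumr_ge0. Qed.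
Lemma a_le_sa x : a x <= sa.
Proof. rewrite /sa (bigD1 x) //= lerDl; exact: sumr_ge0. Qed.
Lemma mu_ge0 : 0 <= mu.
Proof. by apply: sumr_ge0 => x _; rewrite mulr_ge0 // wt_ge0. Qed.
Lemma mu_le_sa : mu <= sa.
Proof.
apply: (@le_trans _ _ (\sum_x wt x * sa)).
  by apply: ler_sum => x _; rewrite ler_wpM2l ?wt_ge0 ?a_le_sa.
by rewrite -mulr_suml sum_wt mul1r.
Qed.
Lemma gg2_le x : gg x ^+ 2 <= sa ^+ 2.
Proof.
have h1 := a_le_sa x; have h2 := ha x; have h3 := mu_ge0; have h4 := mu_le_sa.
rewrite /gg; nra.
Qed.
Lemma sum_wg : \sum_x wt x * gg x = 0.
Proof.
rewrite /gg; under eq_bigr do rewrite mulrBr.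
by rewrite sumrB -/mu -mulr_suml sum_wt mul1r subrr.
Qed.

Lemma tt_ge0 n : 0 <= tt n.
Proof. by rewrite /tt mulr_ge0 ?mulr_ge0 ?powR_ge0 ?sa_ge0. Qed.

Lemma WW_ge0 n s : 0 <= @WW n s.
Proof. by apply: prodr_ge0 => i _; exact: wt_ge0. Qed.

Lemma prod_sum n (F : 'I_n -> 'I_m -> R) :
  \sum_(s : seqs n m) \prod_i F i (s i) = \prod_i \sum_x F i x.
Proof. by rewrite bigA_distr_bigA. Qed.

Lemma sum_WW n : \sum_(s : seqs n m) WW s = 1.
Proof.
rewrite /WW (prod_sum (fun _ x => wt x)); under eq_bigr do rewrite sum_wt.
by rewrite big1.
Qed.

Lemma prod_if n (s : seqs n m) (i : 'I_n) (f : 'I_m -> R) :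
  \prod_k (if k == i then f (s k) else 1) = f (s i).
Proof. by rewrite -big_mkcond big_pred1_eq. Qed.

Lemma cross n (i j : 'I_n) :
  \sum_(s : seqs n m) WW s * gg (s i) * gg (s j)
  = if i == j then \sum_x wt x * gg x ^+ 2 else 0.
Proof.
pose F k x := wt x * (if k == i then gg x else 1) * (if k == j then gg x else 1).
have -> : \sum_(s : seqs n m) WW s * gg (s i) * gg (s j) = \sum_(s : seqs n m) \prod_k F k (s k).
  apply: eq_bigr => s _; rewrite /F !big_split /= !prod_if //.
rewrite (prod_sum F) (bigD1 i) //= /F eqxx.
case: eqP => [<-|/eqP ij].
  rewrite [X in _ * X]big1 ?mulr1.
    by apply: eq_bigr => x _; rewrite expr2 mulrA.
  move=> k /negbTE ->; rewrite -[RHS]sum_wt; apply: eq_bigr => x _; by rewrite !mulr1.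
have -> : \sum_x wt x * gg x * 1 = 0 by rewrite -[RHS]sum_wg; apply: eq_bigr => x _; rewrite mulr1.
by rewrite mul0r.
Qed.

Lemma var_bound n : \sum_(s : seqs n m) WW s * GG s ^+ 2 <= n%:R * sa ^+ 2.
Proof.
have E : forall s : seqs n m, WW s * GG s ^+ 2
    = \sum_(i < n) \sum_(j < n) WW s * gg (s i) * gg (s j).
  move=> s; rewrite /GG expr2 mulr_suml mulr_sumr; apply: eq_bigr => i _.
  rewrite !mulr_sumr; apply: eq_bigr => j _; ring.
under eq_bigr do rewrite E.
rewrite exchange_big /=.
under eq_bigr do rewrite exchange_big /=.
under eq_bigr do under eq_bigr do rewrite cross.
have -> : \sum_(i < n) \sum_(j < n) (if i == j then \sum_x wt x * gg x ^+ 2 else 0)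
    = \sum_(i < n) \sum_x wt x * gg x ^+ 2.
  apply: eq_bigr => i _; rewrite (bigD1 i) //= eqxx [X in _ + X]big1 ?addr0 //.
  by move=> j; rewrite eq_sym => /negbTE ->.
rewrite sumr_const card_ord -[_ *+ n]mulr_natl ler_wpM2l //.
apply: (@le_trans _ _ (\sum_x wt x * sa ^+ 2)).
  by apply: ler_sum => x _; rewrite ler_wpM2l ?wt_ge0 ?gg2_le.
by rewrite -mulr_suml sum_wt mul1r.
Qed.

Definition pp n := \sum_(s : seqs n m | typ s) WW s.

Lemma q_eq n : 1 - pp n = \sum_(s : seqs n m | ~~ typ s) WW s.
Proof. by rewrite -(sum_WW n) (bigID (@typ n)) /= addrC addrK. Qed.

Lemma q_ge0 n : 0 <= 1 - pp n.
Proof. by rewrite q_eq sumr_ge0 // => s _; exact: WW_ge0. Qed.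

Lemma cheb n : (1 - pp n) * tt n ^+ 2 <= n%:R * sa ^+ 2.
Proof.
rewrite q_eq mulr_suml; apply: le_trans (var_bound n).
apply: (@le_trans _ _ (\sum_(s : seqs n m | ~~ typ s) WW s * GG s ^+ 2)).
  apply: ler_sum => s; rewrite /typ -ltNge => hs.
  rewrite ler_wpM2l ?WW_ge0 //.
  have := real_normK (num_real (GG s)); have := tt_ge0 n; have := normr_ge0 (GG s).
  nra.
rewrite [X in _ <= X](bigID (@typ n)) /= lerDr.
by apply: sumr_ge0 => s _; rewrite mulr_ge0 ?WW_ge0 ?sqr_ge0.
Qed.

Lemma alpha_neq0 : alpha != 0.
Proof. by apply: lt0r_neq0; apply: lt_trans hal1; rewrite divr_gt0. Qed.

Definition xx (n : nat) : R := n%:R / (n%:R `^ alpha) ^+ 2.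

Lemma xx_ge0 n : 0 <= xx n.
Proof. by rewrite /xx divr_ge0 // sqr_ge0. Qed.

Lemma all_typ_q0 n : (forall s : seqs n m, typ s) -> 1 - pp n = 0.
Proof. by move=> h; rewrite q_eq big1 // => s; rewrite h. Qed.

Lemma q_bound n : 1 - pp n <= xx n / 4.
Proof.
have hx : 0 <= xx n / 4 by rewrite divr_ge0 ?xx_ge0.
case: n => [|n] in hx *.
  rewrite all_typ_q0 // => s; rewrite /typ /GG big_ord0 normr0 /tt powR0 ?alpha_neq0 //.
  by rewrite mulr0 mul0r.
have [sa0|sap] := eqVneq sa 0.
  have a0 : forall x, a x = 0.
    move=> x; move: sa0; rewrite /sa => /eqP; rewrite psumr_eq0 // => /allP /(_ x).
    by rewrite mem_index_enum => /(_ isT) /eqP.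
  have mu0 : mu = 0 by rewrite /mu big1 // => x _; rewrite a0 mulr0.
  rewrite all_typ_q0 // => s; rewrite /typ /GG big1 ?normr0 ?tt_ge0 //.
  by move=> i _; rewrite /gg a0 mu0 subrr.
have sap' : 0 < sa by rewrite lt0r sap sa_ge0.
set N := (n.+1)%:R `^ alpha.
have Np : 0 < N by rewrite powR_gt0 // ltr0n.
have c := cheb n.+1; rewrite /tt -/N in c.
have hpos : 0 < 4 * N ^+ 2 * sa ^+ 2 by rewrite !mulr_gt0 // exprn_gt0.
rewrite -(ler_pM2r hpos).
have -> : xx n.+1 / 4 * (4 * N ^+ 2 * sa ^+ 2) = n.+1%:R * sa ^+ 2.
  rewrite /xx -/N; field; rewrite ?lt0r_neq0 // exprn_gt0 //.
apply: le_trans c; rewrite le_eqVlt; apply/orP; left; apply/eqP; ring.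
Qed.

Lemma xx_le1 n : xx n <= 1.
Proof.
case: n => [|n]; first by rewrite /xx mul0r.
have n1 : 1 <= n.+1%:R :> R by rewrite ler1n.
have Np : 0 < (n.+1%:R : R) `^ alpha by rewrite powR_gt0 // ltr0n.
rewrite /xx ler_pdivrMr ?exprn_gt0 // mul1r.
rewrite -powR_mulrn ?powR_ge0 // -powRrM.
rewrite -{1}(powRr1 (ler0n _ n.+1)) ler_powR //.
have := hal1; lra.
Qed.

Lemma pp_ge n : 3 / 4 <= pp n.
Proof.
have := q_bound n; have := xx_le1 n => h1 h2.
have : xx n / 4 <= 1 / 4 by rewrite ler_pM2r // invr_gt0.
lra.
Qed.

Lemma pp_gt0 n : 0 < pp n.
Proof. by apply: lt_le_trans (pp_ge n); rewrite divr_gt0. Qed.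

Lemma uu_conj n (s : seqs n m) :
  Num.conj (tens_pow psi n s) * tens_pow psi n s = rC (WW s).
Proof.
rewrite /tens_pow rmorph_prod -big_split /= rC_prod; apply: eq_bigr => i _.
exact: conjzz.
Qed.

Lemma uu_unit n : is_unit_vec (tens_pow psi n).
Proof.
rewrite /is_unit_vec /inner; under eq_bigr do rewrite uu_conj.
by rewrite -rC_sum sum_WW.
Qed.

Definition chi n : vec R (seqs n m) := fun s =>
  if typ s then tens_pow psi n s * rC ((Num.sqrt (pp n))^-1) else 0.
Arguments chi : clear implicits.

Lemma sqrt_aux3 (r : R) : 0 < r -> (Num.sqrt r)^-1 * (Num.sqrt r)^-1 = r^-1.
Proof.
move=> rp; rewrite -invfM -expr2 sqr_sqrtr // ltW //.
Qed.

Lemma sqrt_aux4 (r : R) : 0 < r -> r * (Num.sqrt r)^-1 = Num.sqrt r.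
Proof.
move=> rp; have sp : 0 < Num.sqrt r by rewrite sqrtr_gt0.
have qe : r = Num.sqrt r * Num.sqrt r by rewrite -expr2 sqr_sqrtr // ltW.
set s := Num.sqrt r in sp qe *; rewrite qe; field; exact: lt0r_neq0.
Qed.

Lemma chi_unit n : is_unit_vec (chi n).
Proof.
have pp0 := pp_gt0 n.
rewrite /is_unit_vec /inner.
transitivity (\sum_(s : seqs n m) if typ s then rC (WW s) * rC ((pp n)^-1) else 0).
  apply: eq_bigr => s _; rewrite /chi; case: ifP => _; last by rewrite mulr0.
  rewrite rmorphM /= conj_rC.
  transitivity ((Num.conj (tens_pow psi n s) * tens_pow psi n s) *
    (rC (Num.sqrt (pp n))^-1 * rC (Num.sqrt (pp n))^-1)); first ring.
  by rewrite uu_conj -rCM sqrt_aux3.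
by rewrite -big_mkcond /= -mulr_suml -rC_sum -rCM mulfV ?lt0r_neq0.
Qed.

Lemma inner_u_chi n : inner (tens_pow psi n) (chi n) = rC (Num.sqrt (pp n)).
Proof.
have pp0 := pp_gt0 n.
rewrite /inner.
transitivity (\sum_(s : seqs n m) if typ s then rC (WW s) * rC ((Num.sqrt (pp n))^-1) else 0).
  apply: eq_bigr => s _; rewrite /chi; case: ifP => _; last by rewrite mulr0.
  by rewrite mulrA uu_conj.
by rewrite -big_mkcond /= -mulr_suml -rC_sum -rCM sqrt_aux4.
Qed.

Lemma trnorm_chi n :
  trnorm (opsub (dens (tens_pow psi n)) (dens (chi n))) = 2 * Num.sqrt (1 - pp n).
Proof.
rewrite trnorm_pure; [|exact: uu_unit|exact: chi_unit].
have -> : inner (tens_pow psi n) (chi n) = rC (Num.sqrt (pp n)) := inner_u_chi n.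
rewrite /nrm2 /= expr0n /= addr0 sqr_sqrtr //; exact: ltW (pp_gt0 n).
Qed.

Lemma beta_pos : 0 < 2 * alpha - 1.
Proof. have := hal1; lra. Qed.

Lemma xx_pow n k : (1 <= k%:R * (2 * alpha - 1)) -> (0 < n)%N ->
  xx n ^+ k <= n%:R^-1.
Proof.
move=> hk n0.
have n1 : 1 <= n%:R :> R by rewrite ler1n.
have np : 0 < n%:R :> R by rewrite ltr0n.
have Np : 0 < (n%:R : R) `^ alpha by rewrite powR_gt0.
have E : ((n%:R : R) `^ alpha ^+ 2) ^+ k = n%:R `^ (alpha * (2 * k)%:R).
  by rewrite -exprM powRrM powR_mulrn ?powR_ge0.
have F : (n%:R : R) ^+ k.+1 <= ((n%:R : R) `^ alpha ^+ 2) ^+ k.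
  rewrite E -powR_mulrn ?ler0n // ler_powR //.
  rewrite natrM -[k.+1]addn1 natrD; lra.
rewrite /xx expr_div_n.
apply: (@le_trans _ _ (n%:R ^+ k / n%:R ^+ k.+1)).
  rewrite ler_wpM2l ?exprn_ge0 ?ler0n // lef_pV2 ?posrE ?exprn_gt0 //.
rewrite exprS invfM mulrA mulrC mulrA mulVf ?mul1r // expf_neq0 // lt0r_neq0 //.
Qed.

Lemma xx_small d : 0 < d -> \forall n \near \oo, xx n < d.
Proof.
move=> d0.
have bp := beta_pos.
pose k := Num.Def.archi_bound ((2 * alpha - 1)^-1).
have hk : 1 <= k%:R * (2 * alpha - 1).
  have h : 0 <= (2 * alpha - 1)^-1 by rewrite invr_ge0 ltW.
  have := archi_boundP h; rewrite -(ltr_pM2r bp) mulVf ?lt0r_neq0 // => h'.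
  exact: ltW.
apply: filterS; last exact: (nbhs_infty_gtr ((d ^+ k)^-1 + 1)).
move=> n /= hn.
have n0 : (0 < n)%N.
  rewrite -(ltr0n R); apply: le_lt_trans hn.
  have : 0 <= (d ^+ k)^-1 by rewrite invr_ge0 exprn_ge0 // ltW.
  lra.
rewrite ltNge; apply/negP => hd.
have h1 := xx_pow hk n0.
have h2 : d ^+ k <= xx n ^+ k by rewrite lerXn2r // ?nnegrE ?xx_ge0 // ltW.
have h3 : n%:R^-1 < d ^+ k.
  rewrite -[d ^+ k]invrK ltf_pV2 ?posrE ?invr_gt0 ?exprn_gt0 ?ltr0n //.
  apply: lt_trans hn; rewrite ltrDl //.
have := le_trans h2 h1; rewrite leNgt h3 //.
Qed.

Lemma cvg_chi : (fun n : nat => trnorm (opsub (dens (tens_pow psi n)) (dens (chi n)))) @ \oo --> (0 : R).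
Proof.
have -> : (fun n : nat => trnorm (opsub (dens (tens_pow psi n)) (dens (chi n))))
    = fun n => 2 * Num.sqrt (1 - pp n).
  by apply/funext => n; rewrite trnorm_chi.
apply/cvgr0Pnorm_lt => e e0.
have e20 : 0 < e ^+ 2 by rewrite exprn_gt0.
apply: filterS; last exact: (xx_small e20).
move=> n /= hn.
rewrite ger0_norm ?mulr_ge0 ?sqrtr_ge0 //.
have hq := q_bound n.
have : Num.sqrt (1 - pp n) < Num.sqrt ((e / 2) ^+ 2).
  rewrite ltr_sqrt ?exprn_gt0 ?divr_gt0 //.
  apply: le_lt_trans hq _; rewrite expr_div_n.
  have : 4 = 2 ^+ 2 :> R by rewrite expr2; lra.
  move=> ->; rewrite ltr_pM2r // invr_gt0 exprn_gt0 //.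
rewrite sqrtr_sqr ger0_norm ?divr_ge0 ?ltW //; lra.
Qed.

Lemma hamAn_app n (w : vec R (seqs n m)) :
  opapp (hamAn a n) w = fun s => rC (En s) * w s.
Proof.
apply/funext => s; rewrite /opapp /hamAn (bigD1 s) //= eqxx [X in _ + X]big1 ?addr0 //.
by move=> t; rewrite eq_sym => /negbTE ->; rewrite mul0r.
Qed.

Lemma En_GG n (s : seqs n m) : En s = GG s + n%:R * mu.
Proof.
rewrite /GG /gg sumrB sumr_const card_ord -mulr_natl /En; ring.
Qed.

Lemma chi_nz n : exists s, chi n s != 0.
Proof.
case: (pselect (exists s, chi n s != 0)) => // hn; exfalso.
have := chi_unit n; rewrite /is_unit_vec /inner big1 => [/esym/eqP|s _].
  by rewrite oner_eq0.
case: (eqVneq (chi n s) 0) => [->|h]; first by rewrite mulr0.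
by exfalso; apply: hn; exists s.
Qed.

Lemma delta_eig n (s0 : seqs n m) :
  opapp (hamAn a n) (delta R s0) = fun t => rC (En s0) * delta R s0 t.
Proof.
rewrite hamAn_app; apply/funext => t; rewrite /delta.
by case: eqP => [->|_]; rewrite ?mulr0.
Qed.

Lemma energies_sub n l : energies (hamAn a n) (chi n) l -> exists s : seqs n m, typ s /\ l = En s.
Proof.
move=> [w [Hw Hi]].
have [s hs] : exists s, Num.conj (w s) * chi n s != 0.
  case: (pselect (exists s, Num.conj (w s) * chi n s != 0)) => // hn; exfalso.
  move/negP: Hi; apply; apply/eqP; rewrite /inner big1 // => s _.
  case: (eqVneq (Num.conj (w s) * chi n s) 0) => // h.
  by exfalso; apply: hn; exists s.
move: hs; rewrite mulf_eq0 negb_or conjC_eq0 => /andP [ws cs].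
have ts : typ s.
  move: cs; rewrite /chi; case: ifP => //; by rewrite eqxx.
exists s; split => //.
have := congr1 (fun f => f s) Hw; rewrite hamAn_app /= => /mulIf.
by move=> /(_ ws) /rC_inj.
Qed.

Lemma spread_bound n : energy_spread (hamAn a n) (chi n) <= 4 * (n%:R `^ alpha) * sa.
Proof.
have [s0 hs0] := chi_nz n.
have ne : energies (hamAn a n) (chi n) !=set0.
  exists (En s0); exists (delta R s0); split; first exact: delta_eig.
  rewrite /inner (bigD1 s0) //= big1 ?addr0.
    by rewrite /delta eqxx rmorph1 mul1r.
  by move=> t /negbTE; rewrite /delta => ->; rewrite rmorph0 mul0r.
have bnd : forall l, energies (hamAn a n) (chi n) l ->
    n%:R * mu - tt n <= l <= n%:R * mu + tt n.
  move=> l /energies_sub [s [ts ->]]; rewrite En_GG.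
  move: ts; rewrite /typ ler_norml => /andP [h1 h2].
  apply/andP; split; lra.
have h1 : sup (energies (hamAn a n) (chi n)) <= n%:R * mu + tt n.
  apply: ge_sup => // l /bnd /andP [].
  done.
have h2 : n%:R * mu - tt n <= inf (energies (hamAn a n) (chi n)).
  apply: lb_le_inf => // l /bnd /andP [].
  done.
rewrite /energy_spread.
have : 4 * n%:R `^ alpha * sa = 2 * tt n by rewrite /tt; ring.
move=> ->; lra.
Qed.

Definition cnt n (s : seqs n m) : {ffun 'I_m -> 'I_n.+1} :=
  [ffun x => inord #|[pred i | s i == x]|].

Lemma cnt_val n (s : seqs n m) x : (cnt s x : nat) = #|[pred i | s i == x]|.
Proof.
rewrite ffunE inordK // ltnS; apply: leq_trans (max_card _) _; by rewrite card_ord.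
Qed.

Lemma En_cnt n (s : seqs n m) : En s = \sum_x a x * (cnt s x : nat)%:R.
Proof.
rewrite /En (partition_big (fun i => s i) predT) //=; apply: eq_bigr => x _.
transitivity (\sum_(i | s i == x) a x).
  by apply: eq_big => // i /eqP ->.
have -> : \sum_(i | s i == x) a x = a x *+ #|[pred i | s i == x]|.
  by rewrite -sumr_const; apply: eq_bigl => i; rewrite inE.
by rewrite cnt_val mulr_natr.
Qed.

Definition EN n (N : {ffun 'I_m -> 'I_n.+1}) := \sum_x a x * (N x : nat)%:R.
Definition piece n (N : {ffun 'I_m -> 'I_n.+1}) : vec R (seqs n m) :=
  fun s => if cnt s == N then chi n s else 0.

Lemma piece_eig n (N : {ffun 'I_m -> 'I_n.+1}) :
  opapp (hamAn a n) (piece N) = fun s => rC (EN N) * piece N s.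
Proof.
rewrite hamAn_app; apply/funext => s; rewrite /piece.
case: eqP => [<-|_]; last by rewrite !mulr0.
by rewrite En_cnt.
Qed.

Lemma chi_pieces n : chi n = fun s => \sum_(N : {ffun 'I_m -> 'I_n.+1}) piece N s.
Proof.
apply/funext => s; rewrite (bigD1 (cnt s)) //= /piece eqxx [X in _ + X]big1 ?addr0 //.
by move=> N; rewrite eq_sym => /negbTE ->.
Qed.

End Prob.

Section Comb.
Variable R : realType.
Lemma comb_gen (T I : finType) (H : op R T) (v : vec R T) (k : nat)
  (pc : I -> vec R T) (e0 : vec R T) :
  eigenvector H e0 -> (#|I| <= k)%N ->
  (forall N, exists l, opapp H (pc N) = fun t => l * pc N t) ->
  v = (fun t => \sum_N pc N t) -> comb_of_eigvecs H v k.
Proof.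
move=> he0 hk hpc hv.
pose nz N := [exists t, pc N t != 0].
exists #|I|, (fun i => if nz (enum_val i) then pc (enum_val i) else e0),
  (fun i => if nz (enum_val i) then 1 else 0).
split => //; split.
  move=> i; case: ifP => // /existsP [t ht]; split; [by exists t | exact: hpc].
rewrite hv; apply/funext => t.
rewrite -(big_enum_val (A := predT)
  (fun x => (if nz x then 1 else 0) * (if nz x then pc x else e0) t)).
apply: eq_big => [x|i _]; first by rewrite inE.
case: ifP => [_|/negbT hn]; first by rewrite mul1r.
rewrite mul0r; move/existsPn: hn => /(_ t) /negPn /eqP //.
Qed.
End Comb.

Unset Implicit Arguments.
Set Strict Implicit.

Theorem lemma6 (R : realType) (m : nat) (a : 'I_m -> R)
    (ha : forall x, 0 <= a x) (psi : vec R 'I_m) (hpsi : is_unit_vec psi)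
    (alpha : R) (halpha1 : 1 / 2 < alpha) (halpha2 : alpha < 1) :
  exists chi : forall n : nat, vec R (seqs n m),
    (forall n, is_unit_vec (chi n)) /\
    ((fun n : nat => trnorm (opsub (dens (tens_pow psi n)) (dens (chi n)))) @ \oo
       --> (0 : R)) /\
    (forall n, comb_of_eigvecs (hamAn a n) (chi n) (n.+1 ^ m)) /\
    (forall n, energy_spread (hamAn a n) (chi n)
                 <= 4 * (n%:R `^ alpha) * \sum_(x < m) a x).
Proof.
exists (fun n => chi a psi alpha (n:=n)).
split; first by move=> n; exact: chi_unit.
split; first exact: cvg_chi.
split; last by move=> n; exact: spread_bound.
move=> n.
have [s0 hs0] := chi_nz ha hpsi halpha1 n.
apply: (@comb_gen R _ _ _ _ _ (piece a psi alpha (n:=n)) (delta R s0)).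
- split; first by exists s0; rewrite /delta eqxx oner_eq0.
  by exists (rC (En a s0)); exact: delta_eig.
- by rewrite card_ffun !card_ord.
- by move=> N; exists (rC (EN a N)); exact: piece_eig.
- exact: chi_pieces.
Qed.
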